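(* Let $n\ge 2$, $p=n(n+1)$, let $\beta$ be as below, and define $$a(x)=\frac{p}{2}\Big(\big(\tfrac{1+x}{2}\big)^{p-1}+\beta(x)\big(\tfrac{1-x}{2}\big)^{p-1}\Big)\frac{1}{L_n'(x)},\qquad x\in[z_p,1).$$ Then $a$ is strictly decreasing on $[z_p,1)$ (and $a(x)L_n$ is tangent to $h_{\beta(x)^{1/p}}$ at $x$, with $a(x)\to1$ as $x\to1$).
   Context: $L_n(s)=\frac{1}{2^nn!}\frac{d^n}{ds^n}(s^2-1)^n$; $z_p$ is the largest zero of $L_n$ in $(-1,1)$; $\beta(x)=\frac{(1+x)^pL_n'(x)-p(1+x)^{p-1}L_n(x)}{(1-x)^pL_n'(x)+p(1-x)^{p-1}L_n(x)}$; $h_c(s)=\big(\frac{1+s}{2}\big)^p-c^p\big(\frac{1-s}{2}\big)^p$. *)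

(* Defs.v *)
From Stdlib Require Import Reals Lra List Factorial.
Import ListNotations.
Open Scope R_scope.

(* Polynomials as coefficient lists [a0; a1; ...] (lowest degree first). *)
Fixpoint padd (p q : list R) : list R :=
  match p, q with
  | nil, _ => q
  | _, nil => p
  | a :: p', b :: q' => (a + b) :: padd p' q'
  end.

Definition pscale (c : R) (p : list R) : list R := map (fun a => c * a) p.

Fixpoint pmul (p q : list R) : list R :=
  match p with
  | nil => nil
  | a :: p' => padd (pscale a q) (0 :: pmul p' q)
  end.

Fixpoint ppow (p : list R) (n : nat) : list R :=
  match n with
  | O => [1]
  | S m => pmul p (ppow p m)
  end.

Fixpoint pderiv_aux (k : nat) (l : list R) : list R :=
  match l with
  | nil => nil
  | a :: l' => (INR k * a) :: pderiv_aux (S k) l'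
  end.

Definition pderiv (l : list R) : list R :=
  match l with
  | nil => nil
  | _ :: l' => pderiv_aux 1 l'
  end.

Definition peval (l : list R) (x : R) : R :=
  fold_right (fun a acc => a + x * acc) 0 l.

Definition rodrigues_base (n : nat) : list R := ppow [-1; 0; 1] n.

(* Legendre polynomial via Rodrigues' formula:
   L_n(s) = 1/(2^n n!) d^n/ds^n (s^2-1)^n *)
Definition Legendre (n : nat) (s : R) : R :=
  / (2 ^ n * INR (Factorial.fact n)) * peval (Nat.iter n pderiv (rodrigues_base n)) s.

Definition Legendre' (n : nat) (s : R) : R :=
  / (2 ^ n * INR (Factorial.fact n)) * peval (Nat.iter (S n) pderiv (rodrigues_base n)) s.

Definition beta (n p : nat) (x : R) : R :=
  ((1 + x) ^ p * Legendre' n x - INR p * (1 + x) ^ (p - 1) * Legendre n x) /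
  ((1 - x) ^ p * Legendre' n x + INR p * (1 - x) ^ (p - 1) * Legendre n x).

Definition hfun (p : nat) (c s : R) : R :=
  ((1 + s) / 2) ^ p - c ^ p * ((1 - s) / 2) ^ p.

Definition afun (n p : nat) (x : R) : R :=
  INR p / 2 * (((1 + x) / 2) ^ (p - 1) + beta n p x * ((1 - x) / 2) ^ (p - 1))
  / Legendre' n x.

Definition largest_zero_in_interval (n : nat) (z : R) : Prop :=
  -1 < z < 1 /\ Legendre n z = 0 /\
  (forall y, -1 < y < 1 -> Legendre n y = 0 -> y <= z).

(* Main.v *)
Require Import Defs.
From Stdlib Require Import Reals Lra Lia List Factorial.
Import ListNotations.
Open Scope R_scope.


Lemma peval_padd p q x : peval (padd p q) x = peval p x + peval q x.
Proof.
  revert q; induction p as [|a p IH]; intros [|b q]; simpl; try ring.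
  rewrite IH; ring.
Qed.

Lemma peval_pscale c p x : peval (pscale c p) x = c * peval p x.
Proof. induction p as [|a p IH]; simpl; [ring| rewrite IH; ring]. Qed.

Lemma peval_pmul p q x : peval (pmul p q) x = peval p x * peval q x.
Proof.
  induction p as [|a p IH]; simpl; [ring|].
  rewrite peval_padd, peval_pscale; simpl; rewrite IH; ring.
Qed.

Lemma peval_ppow p m x : peval (ppow p m) x = (peval p x) ^ m.
Proof. induction m; simpl; [ring| rewrite peval_pmul, IHm; ring]. Qed.

Lemma peval_pderiv_aux l : forall k x,
  peval (pderiv_aux k l) x = INR k * peval l x + x * peval (pderiv l) x.
Proof.
  induction l as [|a l IH]; intros k x; simpl; [ring|].
  rewrite IH, (IH 1%nat), S_INR; simpl; ring.
Qed.

Lemma D_eq f x l l' : derivable_pt_lim f x l -> l = l' -> derivable_pt_lim f x l'.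
Proof. intros H ->; exact H. Qed.
Lemma D_ext f g x l : (forall y, f y = g y) -> derivable_pt_lim f x l -> derivable_pt_lim g x l.
Proof.
  intros E H eps He; destruct (H eps He) as [d Hd]; exists d; intros h Hh Hl.
  rewrite <- !E; auto.
Qed.
Lemma D_plus f g x l1 l2 : derivable_pt_lim f x l1 -> derivable_pt_lim g x l2 ->
  derivable_pt_lim (fun y => f y + g y) x (l1 + l2).
Proof. intros; apply (derivable_pt_lim_plus f g); auto. Qed.
Lemma D_minus f g x l1 l2 : derivable_pt_lim f x l1 -> derivable_pt_lim g x l2 ->
  derivable_pt_lim (fun y => f y - g y) x (l1 - l2).
Proof. intros; apply (derivable_pt_lim_minus f g); auto. Qed.
Lemma D_mult f g x l1 l2 : derivable_pt_lim f x l1 -> derivable_pt_lim g x l2 ->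
  derivable_pt_lim (fun y => f y * g y) x (l1 * g x + f x * l2).
Proof. intros; apply (derivable_pt_lim_mult f g); auto. Qed.
Lemma D_const a x : derivable_pt_lim (fun _ => a) x 0.
Proof. apply derivable_pt_lim_const. Qed.
Lemma D_id x : derivable_pt_lim (fun y => y) x 1.
Proof. apply derivable_pt_lim_id. Qed.
Lemma D_powf f x l m : derivable_pt_lim f x l ->
  derivable_pt_lim (fun y => (f y) ^ m) x (INR m * (f x) ^ pred m * l).
Proof.
  intros H. apply (derivable_pt_lim_comp f (fun y => y ^ m)); auto.
  apply derivable_pt_lim_pow.
Qed.
Lemma D_div f g x l1 l2 : derivable_pt_lim f x l1 -> derivable_pt_lim g x l2 -> g x <> 0 ->
  derivable_pt_lim (fun y => f y / g y) x ((l1 * g x - l2 * f x) / (g x)²).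
Proof. intros; apply (derivable_pt_lim_div f g); auto. Qed.

Ltac dtacA := repeat first [apply D_powf | apply D_plus | apply D_minus | apply D_mult | apply D_const
   | apply D_id].

Lemma peval_deriv l x : derivable_pt_lim (peval l) x (peval (pderiv l) x).
Proof.
  revert x; induction l as [|a l IH]; intros x.
  - change (peval []) with (fun _ : R => 0). apply (D_const 0 x).
  - eapply D_eq.
    + change (peval (a :: l)) with (fun y => a + y * peval l y).
      dtacA. apply IH.
    + simpl. rewrite peval_pderiv_aux; simpl; ring.
Qed.

Lemma pderiv_ext l g x l' : (forall y, peval l y = g y) -> derivable_pt_lim g x l' ->
  peval (pderiv l) x = l'.
Proof.
  intros E H. apply (uniqueness_limite (peval l) x).
  - apply peval_deriv.
  - apply (D_ext g); auto.
Qed.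

Lemma Kfact m : forall l q, (forall y, peval l y = (y - 1) ^ m * peval q y) ->
  peval (Nat.iter m pderiv l) 1 = INR (fact m) * peval q 1.
Proof.
  induction m as [|m IH]; intros l q E.
  - simpl. rewrite E; simpl; ring.
  - rewrite Nat.iter_succ_r.
    rewrite (IH _ (padd (pscale (INR (S m)) q) (pmul [-1; 1] (pderiv q)))).
    + rewrite peval_padd, peval_pscale, peval_pmul. change (fact (S m)) with (S m * fact m)%nat.
      rewrite mult_INR. simpl peval. ring.
    + intros y. eapply pderiv_ext. apply E.
      eapply D_eq. dtacA. apply peval_deriv.
      rewrite peval_padd, peval_pscale, peval_pmul. simpl pred. simpl peval. rewrite S_INR. change ((y-1)^S m) with ((y-1)*(y-1)^m). ring.
Qed.


Ltac dtacB := repeat first [apply D_powf | apply D_minus | apply D_plus | apply D_mult | apply D_const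
   | apply D_id].

Definition fk n k x := peval (Nat.iter k pderiv (rodrigues_base n)) x.
Lemma fk_deriv n k x : derivable_pt_lim (fk n k) x (fk n (S k) x).
Proof. unfold fk. apply peval_deriv. Qed.

Lemma fk0 n x : fk n 0 x = (x^2-1)^n.
Proof. unfold fk, rodrigues_base; simpl Nat.iter. rewrite peval_ppow. f_equal. simpl; ring. Qed.

Lemma zero_deriv g x l : (forall y, g y = 0) -> derivable_pt_lim g x l -> l = 0.
Proof.
  intros E H. apply (uniqueness_limite g x); auto.
  apply (D_ext (fun _ => 0)); [intros; rewrite E; auto | apply D_const].
Qed.

Lemma fk1 n x : (1 <= n)%nat -> (x^2-1)*fk n 1 x = 2*INR n*x*fk n 0 x.
Proof.
  intros Hn. unfold fk at 1. simpl Nat.iter.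
  erewrite (pderiv_ext _ (fun y => (y^2-1)^n)).
  2: { intros y; rewrite <- fk0; reflexivity. }
  2: { dtacB. }
  rewrite fk0. destruct n as [|n]; [lia|]. simpl pred.
  change ((x^2-1)^S n) with ((x^2-1)*(x^2-1)^n). simpl INR. ring.
Qed.

Ltac dtac2 := repeat first [apply fk_deriv | apply D_powf | apply D_minus | apply D_plus | apply D_mult | apply D_const
   | apply D_id].

Lemma fkI n k : (1 <= n)%nat -> forall x,
  (x^2-1)*fk n (S (S k)) x + (2*INR k + 2 - 2*INR n)*x*fk n (S k) x
   + ((INR k+1)*INR k - 2*INR n*(INR k+1))*fk n k x = 0.
Proof.
  intros Hn. induction k as [|k IH]; intros x.
  - assert (H: forall y, (y^2-1)*fk n 1 y - 2*INR n*y*fk n 0 y = 0).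
    { intros y; rewrite fk1; auto; ring. }
    eapply (zero_deriv (fun y => (y^2-1)*fk n 1 y - 2*INR n*y*fk n 0 y) x) in H.
    2: dtac2. rewrite <- H. simpl INR. simpl pred. cbv beta. ring.
  - eapply (zero_deriv (fun y => (y^2-1)*fk n (S (S k)) y + (2*INR k + 2 - 2*INR n)*y*fk n (S k) y
   + ((INR k+1)*INR k - 2*INR n*(INR k+1))*fk n k y) x) in IH.
    2: dtac2. rewrite <- IH. rewrite !S_INR. simpl pred. cbv beta. change (INR 0) with 0. ring.
Qed.

Lemma fk_at1 n : fk n n 1 = INR (fact n) * 2 ^ n.
Proof.
  unfold fk. rewrite (Kfact n _ (ppow [1;1] n)).
  - rewrite peval_ppow. simpl. f_equal. f_equal. ring.
  - intros y. unfold rodrigues_base. rewrite !peval_ppow. rewrite <- Rpow_mult_distr.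
    f_equal. simpl; ring.
Qed.


Ltac dtacC := repeat first [apply D_powf | apply D_minus | apply D_plus | apply D_mult | apply D_const
   | apply D_id].

Lemma sign_right g y l : derivable_pt_lim g y l -> l < 0 ->
  exists d, 0 < d /\ forall h, 0 < h < d -> g (y + h) < g y.
Proof.
  intros H Hl. destruct (H (-l)) as [d Hd]; [lra|].
  exists d; split; [apply cond_pos|]. intros h Hh.
  assert (A := Hd h ltac:(lra) ltac:(rewrite Rabs_pos_eq; lra)).
  apply Rabs_def2 in A. destruct A as [A1 A2].
  set (q := (g (y + h) - g y) / h) in *.
  assert (g (y+h) - g y = q * h) by (unfold q; field; lra).
  nra.
Qed.

Lemma sign_left g y l : derivable_pt_lim g y l -> 0 < l ->
  exists d, 0 < d /\ forall h, 0 < h < d -> g (y - h) < g y.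
Proof.
  intros H Hl. destruct (H l) as [d Hd]; [lra|].
  exists d; split; [apply cond_pos|]. intros h Hh.
  assert (A := Hd (-h) ltac:(lra) ltac:(rewrite Rabs_left; lra)).
  apply Rabs_def2 in A. destruct A as [A1 A2].
  replace (y + - h) with (y - h) in * by ring.
  set (q := (g (y - h) - g y) / - h) in *.
  assert (g (y-h) - g y = - q * h) by (unfold q; field; lra).
  nra.
Qed.

Lemma not_dec_min f a b m l : (forall c, a <= c <= b -> f m <= f c) -> a <= m < b ->
  derivable_pt_lim f m l -> ~ l < 0.
Proof.
  intros Hmin Hm H Hl. destruct (sign_right f m l H Hl) as [d [Hd Hh]].
  set (h := Rmin (d/2) ((b-m)/2)).
  assert (0 < h /\ h < d /\ h < b - m).
  { unfold h; split; [apply Rmin_glb_lt; lra|split].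
    - eapply Rle_lt_trans; [apply Rmin_l|lra].
    - eapply Rle_lt_trans; [apply Rmin_r|lra]. }
  specialize (Hh h ltac:(lra)). specialize (Hmin (m+h) ltac:(lra)). lra.
Qed.

Lemma not_inc_min f a b m l : (forall c, a <= c <= b -> f m <= f c) -> a < m <= b ->
  derivable_pt_lim f m l -> ~ 0 < l.
Proof.
  intros Hmin Hm H Hl. destruct (sign_left f m l H Hl) as [d [Hd Hh]].
  set (h := Rmin (d/2) ((m-a)/2)).
  assert (0 < h /\ h < d /\ h < m - a).
  { unfold h; split; [apply Rmin_glb_lt; lra|split].
    - eapply Rle_lt_trans; [apply Rmin_l|lra].
    - eapply Rle_lt_trans; [apply Rmin_r|lra]. }
  specialize (Hh h ltac:(lra)). specialize (Hmin (m-h) ltac:(lra)). lra.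
Qed.

Lemma Gmain (f f1 f2 : R -> R) y0 :
  y0 < 1 -> (forall x, derivable_pt_lim f x (f1 x)) -> (forall x, derivable_pt_lim f1 x (f2 x)) ->
  0 < f1 1 -> (forall t, y0 < t < 1 -> f1 t = 0 -> f2 t < 0) ->
  forall y, y0 < y < 1 -> 0 < f1 y.
Proof.
  intros Hy0 Df Df1 H1 Hc.
  assert (C : forall y, y0 < y < 1 -> ~ f1 y < 0).
  { intros y Hy Hneg.
    destruct (continuity_ab_min f y 1) as [m [Hmin Hm]]; [lra| |].
    { intros c _. apply derivable_continuous_pt. exact (exist _ _ (Df c)). }
    destruct (Req_dec m 1) as [E|E].
    { subst m. apply (not_inc_min f y 1 1 (f1 1) Hmin ltac:(lra) (Df 1) H1). }
    destruct (Req_dec m y) as [E'|E'].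
    { subst m. apply (not_dec_min f y 1 y (f1 y) Hmin ltac:(lra) (Df y) Hneg). }
    assert (f1 m = 0).
    { destruct (Rtotal_order (f1 m) 0) as [L|[L|L]]; auto.
      - exfalso; apply (not_dec_min f y 1 m (f1 m) Hmin ltac:(lra) (Df m) L).
      - exfalso; apply (not_inc_min f y 1 m (f1 m) Hmin ltac:(lra) (Df m) L). }
    assert (Hf2 := Hc m ltac:(lra) H).
    destruct (sign_right f1 m (f2 m) (Df1 m) Hf2) as [d [Hd Hh]].
    set (h := Rmin (d/2) ((1-m)/2)).
    assert (0 < h /\ h < d /\ h < 1 - m).
    { unfold h; split; [apply Rmin_glb_lt; lra|split].
      - eapply Rle_lt_trans; [apply Rmin_l|lra].
      - eapply Rle_lt_trans; [apply Rmin_r|lra]. }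
    destruct (MVT_cor2 f f1 m (m+h)) as [c [Ec Hc']]; [lra| intros; apply Df|].
    assert (f1 c < 0).
    { replace c with (m + (c - m)) by ring. rewrite <- H. apply Hh. lra. }
    specialize (Hmin (m+h) ltac:(lra)). nra. }
  intros y Hy.
  destruct (Rtotal_order (f1 y) 0) as [L|[L|L]]; auto.
  - exfalso; apply (C y Hy L).
  - exfalso. assert (Hf2 := Hc y Hy L).
    destruct (sign_right f1 y (f2 y) (Df1 y) Hf2) as [d [Hd Hh]].
    set (h := Rmin (d/2) ((1-y)/2)).
    assert (0 < h /\ h < d /\ h < 1 - y).
    { unfold h; split; [apply Rmin_glb_lt; lra|split].
      - eapply Rle_lt_trans; [apply Rmin_l|lra].
      - eapply Rle_lt_trans; [apply Rmin_r|lra]. }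
    apply (C (y+h)); [lra|]. rewrite <- L. apply Hh; lra.
Qed.

Lemma analysis (F0 F1 F2 F3 : R -> R) (P z : R) :
  2 < P ->
  (forall x, derivable_pt_lim F0 x (F1 x)) ->
  (forall x, derivable_pt_lim F1 x (F2 x)) ->
  (forall x, derivable_pt_lim F2 x (F3 x)) ->
  (forall x, (1 - x^2) * F2 x - 2 * x * F1 x + P * F0 x = 0) ->
  (forall x, (1 - x^2) * F3 x - 4 * x * F2 x + (P - 2) * F1 x = 0) ->
  F0 1 = 1 -> -1 < z < 1 -> F0 z = 0 ->
  (forall y, -1 < y < 1 -> F0 y = 0 -> y <= z) ->
  (forall y, z < y < 1 -> 0 < F0 y /\ 0 < F1 y /\ 0 < F2 y) /\ 0 < F1 z.
Proof.
  intros HP D0 D1 D2 O1 O2 F01 Hz Fz Hlz.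
  assert (cont0 : continuity F0).
  { intros c. apply derivable_continuous_pt. exact (exist _ _ (D0 c)). }
  assert (pos0 : forall y, z < y < 1 -> 0 < F0 y).
  { intros y Hy. destruct (Rtotal_order (F0 y) 0) as [L|[L|L]]; auto.
    - destruct (IVT F0 y 1 cont0 ltac:(lra) L ltac:(lra)) as [t [Ht Et]].
      assert (t <> 1) by (intro; subst; lra).
      assert (t <= z) by (apply Hlz; auto; lra). lra.
    - assert (y <= z) by (apply Hlz; auto; lra). lra. }
  assert (F11 : F1 1 = P / 2).
  { specialize (O1 1). ring_simplify in O1. rewrite F01 in O1. lra. }
  assert (F21 : 0 < F2 1).
  { specialize (O2 1). assert (E: F2 1 = (P-2)*F1 1/4) by (ring_simplify in O2; lra). rewrite E, F11. apply Rmult_lt_0_compat; [|lra]. apply Rmult_lt_0_compat; lra. }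
  assert (pos1 : forall y, z < y < 1 -> 0 < F1 y).
  { apply (Gmain F0 F1 F2 z ltac:(lra) D0 D1 ltac:(lra)).
    intros t Ht E. specialize (O1 t). specialize (pos0 t Ht). rewrite E in O1.
    assert (0 < 1 - t^2) by nra. nra. }
  assert (pos2 : forall y, z < y < 1 -> 0 < F2 y).
  { apply (Gmain F1 F2 F3 z ltac:(lra) D1 D2 F21).
    intros t Ht E. specialize (O2 t). specialize (pos1 t Ht). rewrite E in O2.
    assert (0 < 1 - t^2) by nra. nra. }
  split; [intros; repeat split; auto|].
  destruct (Rtotal_order (F1 z) 0) as [L|[L|L]]; auto; exfalso.
  - destruct (sign_right F0 z (F1 z) (D0 z) L) as [d [Hd Hh]].
    set (h := Rmin (d/2) ((1-z)/2)).
    assert (0 < h /\ h < d /\ h < 1 - z).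
    { unfold h; split; [apply Rmin_glb_lt; lra|split].
      - eapply Rle_lt_trans; [apply Rmin_l|lra].
      - eapply Rle_lt_trans; [apply Rmin_r|lra]. }
    specialize (Hh h ltac:(lra)). specialize (pos0 (z+h) ltac:(lra)). lra.
  - destruct (Rle_or_lt 0 z) as [Z|Z].
    + set (Q := fun t => (1 - t^2)^2 * F1 t ^ 2 + P * (1 - t^2) * F0 t ^ 2).
      destruct (MVT_cor2 Q (fun t => - 2 * t * P * F0 t ^ 2) z ((z+1)/2)) as [c [Ec Hc]]; [lra| |].
      { intros c Hc. eapply D_eq. unfold Q. dtacC; auto.
        specialize (O1 c). simpl pred.
        transitivity (- 2 * c * P * F0 c ^ 2 + 2 * (1 - c^2) * F1 c * ((1 - c ^ 2) * F2 c - 2 * c * F1 c + P * F0 c)).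
        - simpl INR. ring.
        - rewrite O1. ring. }
      unfold Q in Ec. rewrite Fz, L in Ec.
      assert (A := pos0 ((z+1)/2) ltac:(lra)).
      assert (0 < 1 - ((z+1)/2)^2) by nra.
      assert (0 < P * (1 - ((z+1)/2)^2) * F0 ((z+1)/2) ^ 2).
      { apply Rmult_lt_0_compat; [nra|]. apply pow_lt; auto. }
      assert (0 <= (1 - ((z+1)/2)^2)^2 * F1 ((z+1)/2) ^ 2) by (apply Rmult_le_pos; apply pow2_ge_0).
      assert (0 <= F0 c ^ 2) by apply pow2_ge_0.
      assert (0 <= c * P * F0 c ^ 2) by (apply Rmult_le_pos; nra).
      ring_simplify in Ec. nra.
    + set (Q := fun t => (1 - t^2) * F1 t ^ 2 + P * F0 t ^ 2).
      destruct (MVT_cor2 Q (fun t => 2 * t * F1 t ^ 2) z (z/2)) as [c [Ec Hc]]; [lra| |].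
      { intros c Hc. eapply D_eq. unfold Q. dtacC; auto.
        specialize (O1 c). simpl pred.
        transitivity (2 * c * F1 c ^ 2 + 2 * F1 c * ((1 - c ^ 2) * F2 c - 2 * c * F1 c + P * F0 c)).
        - simpl INR. ring.
        - rewrite O1. ring. }
      unfold Q in Ec. rewrite Fz, L in Ec.
      assert (A := pos0 (z/2) ltac:(lra)).
      assert (0 < 1 - (z/2)^2) by nra.
      assert (0 < P * F0 (z/2) ^ 2).
      { apply Rmult_lt_0_compat; [nra|]. apply pow_lt; auto. }
      assert (0 <= (1 - (z/2)^2) * F1 (z/2) ^ 2) by (apply Rmult_le_pos; [lra| apply pow2_ge_0]).
      assert (0 <= F1 c ^ 2) by apply pow2_ge_0.
      assert (c * F1 c ^ 2 <= 0) by nra.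
      ring_simplify in Ec. nra.
Qed.


Lemma pow_div2 a m : (a/2)^m = a^m / 2^m.
Proof. unfold Rdiv; rewrite Rpow_mult_distr, pow_inv; reflexivity. Qed.

Lemma Leg_deriv n x : derivable_pt_lim (Legendre n) x (Legendre' n x).
Proof.
  apply (D_ext (fun s => / (2 ^ n * INR (fact n)) * fk n n s)); [intros; reflexivity|].
  eapply D_eq; [apply D_mult; [apply D_const| apply fk_deriv]|].
  unfold Legendre', fk; simpl; ring.
Qed.

Lemma Leg_facts n (Hn : (2 <= n)%nat) : let c0 := / (2 ^ n * INR (fact n)) in
  let P := INR (n * (n+1)) in
  (forall x, derivable_pt_lim (Legendre' n) x (c0 * fk n (S (S n)) x)) /\
  (forall x, derivable_pt_lim (fun x => c0 * fk n (S (S n)) x) x (c0 * fk n (S (S (S n))) x)) /\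
  (forall x, (1 - x^2) * (c0 * fk n (S (S n)) x) - 2 * x * Legendre' n x + P * Legendre n x = 0) /\
  (forall x, (1 - x^2) * (c0 * fk n (S (S (S n))) x) - 4 * x * (c0 * fk n (S (S n)) x) + (P - 2) * Legendre' n x = 0) /\
  Legendre n 1 = 1.
Proof.
  intros c0 P. assert (Hn1 : (1 <= n)%nat) by lia.
  assert (EP : P = INR n * (INR n + 1)) by (unfold P; rewrite mult_INR, plus_INR; reflexivity).
  repeat split.
  - intros x. apply (D_ext (fun s => c0 * fk n (S n) s)); [intros; reflexivity|].
    eapply D_eq; [apply D_mult; [apply D_const| apply fk_deriv]|]. cbv beta. ring.
  - intros x. eapply D_eq; [apply D_mult; [apply D_const| apply fk_deriv]|]. cbv beta. ring.
  - intros x. assert (H := fkI n n Hn1 x).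
    transitivity (-c0 * ((x^2-1)*fk n (S (S n)) x + (2*INR n + 2 - 2*INR n)*x*fk n (S n) x
      + ((INR n+1)*INR n - 2*INR n*(INR n+1))*fk n n x)).
    + rewrite EP. unfold Legendre, Legendre', fk. fold c0. simpl Nat.iter. ring.
    + rewrite H; ring.
  - intros x. assert (H := fkI n (S n) Hn1 x).
    transitivity (-c0 * ((x^2-1)*fk n (S (S (S n))) x + (2*INR (S n) + 2 - 2*INR n)*x*fk n (S (S n)) x
      + ((INR (S n)+1)*INR (S n) - 2*INR n*(INR (S n)+1))*fk n (S n) x)).
    + rewrite EP, S_INR. unfold Legendre', fk. fold c0. ring.
    + rewrite H; ring.
  - unfold Legendre. change (peval (Nat.iter n pderiv (rodrigues_base n)) 1) with (fk n n 1).
    rewrite fk_at1. field. split; [apply INR_fact_neq_0| apply pow_nonzero; lra].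
Qed.


Ltac dtacE := repeat first [apply D_powf | apply D_minus | apply D_plus | apply D_mult | apply D_const
   | apply D_id].

Ltac dtw h1 h2 := repeat first [apply h1 | apply h2 | apply D_powf | apply D_minus | apply D_plus | apply D_mult | apply D_const
   | apply D_id].

Ltac dtw2 h1 h2 := repeat first [apply D_const | apply h1 | apply h2 | apply D_powf | apply D_minus | apply D_plus | apply D_mult
   | apply D_id].

Theorem lemma5p4 (n : nat) (hn : (2 <= n)%nat) (z : R)
  (hz : largest_zero_in_interval n z) :
  let p := (n * (n + 1))%nat in
  (forall x y, z <= x -> x < y -> y < 1 -> afun n p y < afun n p x) /\
  (forall x, z <= x < 1 ->
     let c := Rpower (beta n p x) (/ INR p) in
     afun n p x * Legendre n x = hfun p c x /\
     derivable_pt_lim (fun s => afun n p x * Legendre n s - hfun p c s) x 0) /\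
  limit1_in (afun n p) (fun x => z <= x < 1) 1 1.
Proof.
  intros p.
  destruct (Leg_facts n hn) as [D1 [D2 [O1 [O2 L1]]]].
  set (c0 := / (2 ^ n * INR (fact n))) in *.
  pose (F2 := fun x => c0 * fk n (S (S n)) x).
  pose (F3 := fun x => c0 * fk n (S (S (S n))) x).
  assert (D1' : forall x, derivable_pt_lim (Legendre' n) x (F2 x)) by exact D1.
  assert (D2' : forall x, derivable_pt_lim F2 x (F3 x)) by exact D2.
  assert (O1' : forall x, (1 - x^2) * F2 x - 2 * x * Legendre' n x + INR p * Legendre n x = 0) by exact O1.
  assert (O2' : forall x, (1 - x^2) * F3 x - 4 * x * F2 x + (INR p - 2) * Legendre' n x = 0) by exact O2.
  clear D1 D2 O1 O2.
  assert (Hp6 : (6 <= p)%nat) by (unfold p; nia).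
  assert (HP : 6 <= INR p) by (replace 6 with (INR 6) by (simpl; ring); apply le_INR; auto).
  destruct hz as [Hz [Fz Hlz]].
  destruct (analysis (Legendre n) (Legendre' n) F2 F3 (INR p) z ltac:(lra)
     (Leg_deriv n) D1' D2' O1' O2' L1 Hz Fz Hlz) as [pos Fz1].
  clearbody p F2 F3 c0.
  set (F0 := Legendre n) in *. set (F1 := Legendre' n) in *.
  assert (DL0 : forall x, derivable_pt_lim (fun s => F0 s) x (F1 x)) by apply Leg_deriv.
  destruct p as [|q]; [lia|].
  replace (S q - 1)%nat with q by lia.
  destruct q as [|r]; [lia|].
  set (q := S r) in *.
  set (D := fun t => (1 - t) * F1 t + INR (S q) * F0 t).
  set (psi := fun t => INR (S q) * ((1 + t) / 2) ^ q / D t).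
  assert (Dpos : forall t, z <= t < 1 -> 0 < D t).
  { intros t Ht. unfold D. destruct (Req_dec t z) as [E|E].
    - subst t. rewrite Fz. nra.
    - destruct (pos t ltac:(lra)) as [A [B C]]. nra. }
  assert (F1pos : forall t, z <= t < 1 -> 0 < F1 t).
  { intros t Ht. destruct (Req_dec t z) as [E|E]; [subst; auto|]. apply pos; lra. }
  assert (F0nn : forall t, z <= t < 1 -> 0 <= F0 t).
  { intros t Ht. destruct (Req_dec t z) as [E|E]; [rewrite E, Fz; lra|]. left; apply pos; lra. }
  assert (Hpow : forall t, (1 - t) ^ q <> 0 /\ (1 + t) ^ q <> 0 -> True) by auto.
  assert (AF : forall t, z <= t < 1 -> afun n (S q) t = psi t).
  { intros t Ht. unfold afun, beta, psi. fold F0 F1.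
    assert (0 < D t) by auto. assert (0 < F1 t) by auto.
    assert (0 < 1 - t) by lra. assert (0 < 1 + t) by (destruct Hz; lra).
    assert (0 < (1 - t) ^ q) by (apply pow_lt; auto).
    assert (0 < (1 + t) ^ q) by (apply pow_lt; auto).
    assert (0 < 2 ^ q) by (apply pow_lt; lra).
    assert (E : (1 - t) ^ S q * F1 t + INR (S q) * (1 - t) ^ q * F0 t = (1 - t) ^ q * D t)
      by (unfold D; simpl pow; ring).
    replace (S q - 1)%nat with q by lia. rewrite E. rewrite !pow_div2. unfold D in *.
    simpl pow. field. repeat split; try apply pow_nonzero; lra. }
  set (psi' := fun t => - INR (S q) * INR (S q) / 2 * ((1+t)/2)^r * (1 - t^2) * F2 t / (D t)^2).
  assert (Dpsi : forall t, D t <> 0 -> derivable_pt_lim psi t (psi' t)).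
  { intros t Ht. eapply D_eq.
    - unfold psi. apply D_div. { dtacE. } { unfold D; dtw DL0 D1'. } auto.
    - specialize (O1' t). unfold psi'.
      transitivity (psi' t + INR (S q) * INR q * ((1+t)/2)^r *
          ((1 - t^2) * F2 t - 2 * t * F1 t + INR (S q) * F0 t) / (2 * (D t)^2)).
      + unfold psi', D in *. unfold q in *. change (pred (S r)) with r. change (((1+t)/2)^(S r)) with ((1+t)/2 * ((1+t)/2)^r). rewrite !S_INR in *. unfold Rsqr. field. auto.
      + rewrite O1'. unfold psi'. field. auto. }
  split; [|split].
  - intros x y Hx Hxy Hy.
    rewrite !AF by lra.
    destruct (MVT_cor2 psi psi' x y Hxy) as [c [Ec Hc]].
    { intros c Hc. apply Dpsi. assert (0 < D c) by (apply Dpos; lra). lra. }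
    assert (psi' c < 0).
    { unfold psi'. destruct (pos c ltac:(lra)) as [A [B C]].
      assert (0 < D c) by (apply Dpos; lra).
      assert (0 < ((1 + c) / 2) ^ r) by (apply pow_lt; lra).
      assert (0 < 1 - c^2) by nra.
      assert (0 < D c ^ 2) by (apply pow_lt; lra).
      assert (0 < INR (S q) * INR (S q) / 2 * ((1 + c) / 2) ^ r * (1 - c ^ 2) * F2 c / D c ^ 2).
      { apply Rdiv_lt_0_compat; auto. repeat apply Rmult_lt_0_compat; lra. }
      fold (D c). lra. }
    nra.
  - intros x Hx c.
    assert (0 < D x) by auto. assert (0 < F1 x) by auto.
    assert (0 < 1 - x) by lra. assert (0 < 1 + x) by (destruct Hz; lra).
    assert (0 < (1 - x) ^ q) by (apply pow_lt; auto).
    assert (0 < (1 + x) ^ q) by (apply pow_lt; auto).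
    assert (0 < 2 ^ q) by (apply pow_lt; lra).
    assert (N1 : 0 < (1 + x) * F1 x - INR (S q) * F0 x).
    { destruct (Req_dec x z) as [E|E]. { rewrite E, Fz. rewrite E in *. nra. }
      destruct (pos x ltac:(lra)) as [A [B C]]. specialize (O1' x). fold F0 F1 in O1'.
      assert (0 < 1 - x^2) by nra. nra. }
    assert (HB : beta n (S q) x = (1+x)^q * ((1+x)*F1 x - INR (S q) * F0 x) / ((1-x)^q * D x)).
    { unfold beta. replace (S q - 1)%nat with q by lia. fold F0 F1.
      assert (E : (1 - x) ^ S q * F1 x + INR (S q) * (1 - x) ^ q * F0 x = (1 - x) ^ q * D x)
        by (unfold D; simpl pow; ring).
      assert (E' : (1 + x) ^ S q * F1 x - INR (S q) * (1 + x) ^ q * F0 x =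
                   (1+x)^q * ((1+x)*F1 x - INR (S q) * F0 x))
        by (simpl pow; ring).
      rewrite E, E'. reflexivity. }
    assert (Bpos : 0 < beta n (S q) x).
    { rewrite HB. apply Rdiv_lt_0_compat; apply Rmult_lt_0_compat; auto. }
    assert (Hcp : c ^ S q = beta n (S q) x).
    { unfold c. rewrite <- Rpower_pow by (unfold Rpower; apply exp_pos).
      rewrite Rpower_mult, Rinv_l, Rpower_1; auto. apply not_0_INR. lia. }
    split.
    + unfold hfun. rewrite Hcp. unfold afun. replace (S q - 1)%nat with q by lia.
      rewrite HB. rewrite !pow_div2. fold F0 F1.
      change ((1+x)^S q) with ((1+x)*(1+x)^q).
      change ((1-x)^S q) with ((1-x)*(1-x)^q).
      change (2^S q) with (2*2^q).
      unfold D. field. unfold D in *. repeat split; lra.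
    + unfold hfun. eapply D_eq; [dtw2 DL0 D1'|].
      rewrite Hcp. unfold afun. replace (S q - 1)%nat with q by lia.
      change (pred (S q)) with q. fold F1. field. lra.
  - unfold limit1_in, limit_in. intros eps He.
    assert (Cont : continuity_pt psi 1).
    { apply derivable_continuous_pt. exists (psi' 1). apply Dpsi. unfold D. rewrite L1.
      assert (0 < INR (S q)) by lra. replace (1 - 1) with 0 by ring. lra. }
    assert (psi1 : psi 1 = 1).
    { unfold psi, D. rewrite L1. replace ((1+1)/2) with 1 by field. rewrite pow1.
      replace (1 - 1) with 0 by ring. field. lra. }
    destruct (Cont eps He) as [alp [Ha H]]. exists alp. split; auto.
    intros x [Hx Hd]. rewrite AF by lra. rewrite <- psi1. apply H.
    split; [split; [constructor|lra] | auto].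
Qed.
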